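(* Let $\varepsilon(n,k)=e(n,k)+q\,o(n,k)$ and $\lambda(n,k)=L(n,k)+q\bar L(n,k)$ in $\mathbb{Z}[q]$. Then $\varepsilon(n,0)=\lambda(n,0)=1$ for all $n\ge0$, $\varepsilon(0,k)=\lambda(0,k)=0$ for $k>0$, and for all $n\ge1$, $k\ge1$, modulo $q^2-1$, $$\varepsilon(n,k)\equiv q^k\big(\varepsilon(n-1,k)+\varepsilon(n-1,k-1)\big),\qquad \lambda(n,k)\equiv q^k\lambda(n-1,k)+\lambda(n-1,k-1).$$
   Context: $e(n,k)$ (resp. $o(n,k)$) is the number of $k$-element subsets of $\{1,\dots,n\}$ with even (resp. odd) sum, the empty set counting as even. Losanitsch's triangle $(L(n,k))$ is defined by $L(0,k)=[k=0]$, $L(1,k)=[k\le 1]$ for $k\ge0$, $L(n,k)=0$ for $k<0$, and for $n\ge 2$: $L(n,k)=L(n-2,k)+\binom{n-2}{k-1}+L(n-2,k-2)$ (with $\binom{m}{j}=0$ for $j<0$ or $j>m$); $\bar L(n,k)=\binom nk-L(n,k)$. *)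

(* Defs.v *)
From HB Require Import structures.
From mathcomp Require Import all_boot all_order all_algebra.
Set Implicit Arguments. Unset Strict Implicit. Unset Printing Implicit Defensive.
Import GRing.Theory.
Local Open Scope ring_scope.

(* {1,...,n} is represented by 'I_n, element i standing for i+1. *)
Definition subset_sum (n : nat) (A : {set 'I_n}) : nat :=
  (\sum_(i in A) (i.+1 : nat))%N.

Definition e_cnt (n k : nat) : nat :=
  #|[set A : {set 'I_n} | (#|A| == k) && ~~ odd (subset_sum A)]|.
Definition o_cnt (n k : nat) : nat :=
  #|[set A : {set 'I_n} | (#|A| == k) && odd (subset_sum A)]|.

(* Losanitsch's triangle; k is a nat, so k<0 cases are the 'else 0' branches. *)
Fixpoint L (n k : nat) {struct n} : nat :=
  match n with
  | 0 => (k == 0%N : nat)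
  | 1 => (k <= 1)%N : nat
  | m.+2 => (L m k + (if k is k'.+1 then 'C(m, k') else 0)
             + (if k is k''.+2 then L m k'' else 0))%N
  end.

(* Lbar(n,k) = C(n,k) - L(n,k), taken in int (no truncation). *)
Definition Lbar (n k : nat) : int := ('C(n, k))%:Z - (L n k)%:Z.

Definition eps (n k : nat) : {poly int} :=
  (e_cnt n k)%:R + (o_cnt n k)%:R * 'X.
Definition lam (n k : nat) : {poly int} :=
  (L n k)%:R + (Lbar n k)%:P * 'X.

Definition congr_q2 (p r : {poly int}) : Prop :=
  exists c : {poly int}, p - r = c * ('X^2 - 1).

(* Main.v *)
Require Import Defs.
From HB Require Import structures.
From mathcomp Require Import all_boot all_order all_algebra.
From mathcomp Require Import ring zify.
Import GRing.Theory.
Definition Nf (n k : nat) : nat :=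
  if odd n || ~~ odd k then 'C(n./2, k./2) else 0.

Lemma L0 n : L n 0 = 1.
Proof. by elim/ltn_ind: n => [[|[|n]]] //= IH; rewrite IH ?addn0 // ltnS leqnSn. Qed.

Lemma NfS n k : Nf n.+2 k.+2 = Nf n k.+2 + Nf n k.
Proof.
rewrite /Nf /= negbK; case: (odd n); case: (odd k) => //=;
  by rewrite -/(half k.+2) /= binS.
Qed.

Lemma L2 n k : (2 * L n k = 'C(n, k) + Nf n k)%N.
Proof.
elim/ltn_ind: n k => [[|[|n]]] IH k.
- case: k => [|[|k]] //=. rewrite /Nf /= negbK. by case: (odd k) => //=; rewrite bin0n.
- by case: k => [|[|k]].
- have IHn := IH n (ltnW (ltnSn _)).
  case: k => [|[|k]].
  + by rewrite /= L0 /Nf /= !bin0 orbT.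
  + have := IHn 1; rewrite /= !bin1 bin0 /Nf /= negbK bin0 orbF.
    rewrite bin0; case: (odd n) => /=; lia.
  + have := IHn k.+2; have := IHn k; rewrite /= NfS !binS. lia.
Qed.

Local Open Scope ring_scope.

Lemma dh n : exists m (b : bool), (n = (b : nat) + m.*2)%N.
Proof. by exists n./2, (odd n); rewrite (odd_double_half n). Qed.

Lemma NfRec n k : (Nf n.+1 k.+1)%:R = (-1)^+k.+1 * (Nf n k.+1)%:R + (Nf n k)%:R :> int.
Proof.
have [m [b ->]] := dh n; have [j [c ->]] := dh k.
rewrite /Nf.
have h1 x : odd x.*2 = false by rewrite odd_double.
have h2 x : (x.*2)./2 = x by rewrite half_double.
have h3 x : (x.*2).+1./2 = x by rewrite /= uphalf_double.
have h4 x : (x.*2).+2./2 = x.+1 by rewrite /= -/(half _) half_double.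
case: b; case: c; rewrite /= ?add0n ?add1n /= ?h1 ?h2 ?h3 ?h4 /= ?uphalf_double ?exprS -?mul2n ?exprM ?sqrrN ?expr1n /=.
- by rewrite binS natrD; ring.
- by rewrite ?mulr0 ?add0r; ring.
- by rewrite ?mulr0 ?addr0; ring.
- by rewrite ?mulr0 ?add0r; ring.
Qed.

Definition S n k : int := \sum_(A : {set 'I_n} | #|A| == k) (-1)^+(subset_sum A).

Lemma eo_card n k : (e_cnt n k + o_cnt n k)%N = 'C(n, k).
Proof.
rewrite /e_cnt /o_cnt -[in RHS](card_ord n) -card_draws.
rewrite -(cardsID [set A : {set 'I_n} | odd (subset_sum A)] [set A : {set 'I_n} | #|A| == k]) addnC.
congr (_ + _)%N; by apply: eq_card => A; rewrite !inE // andbC.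
Qed.

Lemma eo_diff n k : (e_cnt n k)%:R - (o_cnt n k)%:R = S n k.
Proof.
rewrite /S (bigID (fun A : {set 'I_n} => odd (subset_sum A))) /= addrC.
rewrite /e_cnt /o_cnt.
rewrite (eq_bigr (fun _ => 1)); last by move=> A /andP [_ /negbTE h]; rewrite -signr_odd h.
rewrite [X in _ = _ + X](eq_bigr (fun _ => -1)); last by move=> A /andP [_ h]; rewrite -signr_odd h expr1.
rewrite sumr_const sumr_const -mulNrn; rewrite !cardsE //.
Qed.

Section Split.
Variable n : nat.
Definition phi (B : {set 'I_n}) : {set 'I_n.+1} := [set lift ord0 j | j in B].
Definition psi (B : {set 'I_n}) : {set 'I_n.+1} := ord0 |: phi B.
Definition gg (p : bool * {set 'I_n}) := if p.1 then psi p.2 else phi p.2.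
Definition hh (A : {set 'I_n.+1}) : bool * {set 'I_n} := (ord0 \in A, [set j | lift ord0 j \in A]).

Lemma ord0_phi B : (ord0 \in phi B) = false.
Proof. by apply/negbTE/imsetP => -[j _ /eqP]; rewrite (negbTE (neq_lift _ _)). Qed.

Lemma lift_phi B j : (lift ord0 j \in phi B) = (j \in B).
Proof. by rewrite mem_imset //; exact: lift_inj. Qed.

Lemma gh : cancel hh gg.
Proof.
move=> A; apply/setP => x; rewrite /gg /hh /=.
case: (unliftP ord0 x) => [j ->|->].
- case: (ord0 \in A); rewrite ?inE ?lift_phi ?inE //.
- by case: (boolP (ord0 \in A)) => h; rewrite ?inE ?eqxx ?ord0_phi // (negbTE h).
Qed.

Lemma hg : cancel gg hh.
Proof.
move=> [b B]; rewrite /gg /hh /=; case: b => /=; congr (_, _).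
- by rewrite !inE eqxx.
- by apply/setP => j; rewrite !inE eq_sym (negbTE (neq_lift _ _)) lift_phi.
- by rewrite ord0_phi.
- by apply/setP => j; rewrite !inE lift_phi.
Qed.

Lemma sum_split (F : {set 'I_n.+1} -> int) :
  \sum_A F A = \sum_(B : {set 'I_n}) (F (psi B) + F (phi B)).
Proof.
rewrite (reindex gg); last by exists hh => x _; [exact: hg | exact: gh].
rewrite -(pair_big xpredT xpredT (fun b B => F (gg (b, B)))) /= big_bool /= -big_split //.
Qed.

Lemma card_phi B : #|phi B| = #|B|.
Proof. by rewrite card_imset //; exact: lift_inj. Qed.

Lemma card_psi B : #|psi B| = #|B|.+1.
Proof. by rewrite cardsU1 ord0_phi card_phi. Qed.

Lemma sum_phi B : subset_sum (phi B) = (subset_sum B + #|B|)%N.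
Proof.
rewrite /subset_sum big_imset /=; last by move=> x y _ _; exact: lift_inj.
rewrite -sum1_card -big_split /=; apply: eq_bigr => j _; by rewrite /bump leq0n add1n addn1.
Qed.

Lemma sum_psi B : subset_sum (psi B) = (subset_sum B + #|B|).+1.
Proof. by rewrite /psi /subset_sum big_setU1 ?ord0_phi //= -/(subset_sum _) sum_phi. Qed.
End Split.

Lemma S_rec n k : S n.+1 k.+1 = (-1)^+k.+1 * (S n k.+1 + S n k).
Proof.
rewrite /S big_mkcond /= sum_split [X in _ * (X + _)]big_mkcond [X in _ * (_ + X)]big_mkcond /=.
rewrite -big_split mulr_sumr /=; apply: eq_bigr => B _.
rewrite card_psi card_phi sum_psi sum_phi eqSS.
case: (eqVneq #|B| k) => [->|hk].
    by rewrite (ltn_eqF (ltnSn k)) add0r exprS exprD exprS; ring.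
rewrite add0r; case: (eqVneq #|B| k.+1) => [->|hk2]; last by rewrite mulr0.
by rewrite addr0 exprD exprS; ring.
Qed.

Lemma congr_eval (p r : {poly int}) :
  p.[1] = r.[1] -> p.[-1] = r.[-1] -> congr_q2 p r.
Proof.
move=> h1 h2.
have : root (p - r) 1 by rewrite /root !hornerE h1 subrr.
case/factor_theorem => c1 hc1.
have : root c1 (-1).
  have : (p - r).[-1] = 0 by rewrite !hornerE h2 subrr.
  rewrite hc1 !hornerE => /eqP; rewrite mulf_eq0 => /orP [//|].
  by rewrite -opprD oppr_eq0.
case/factor_theorem => c2 hc2.
exists c2; rewrite hc1 hc2 polyCN polyC1 -mulrA; congr (_ * _). rewrite opprK -[X in _ = _ - X](expr1n _ 2) subr_sqr mulrC; reflexivity.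
Qed.

Lemma eps_eval n k (x : int) : (eps n k).[x] = (e_cnt n k)%:R + (o_cnt n k)%:R * x.
Proof. by rewrite /eps !hornerE !hornerMn -polyC1 hornerC. Qed.

Lemma lam_eval n k (x : int) : (lam n k).[x] = (L n k)%:R + Lbar n k * x.
Proof. by rewrite /lam !hornerE !hornerMn -polyC1 hornerC. Qed.

Lemma o_cnt0 n : o_cnt n 0 = 0%N.
Proof.
apply/eqP; rewrite cards_eq0; apply/eqP/setP => A; rewrite !inE.
case: (eqVneq #|A| 0%N) => [/eqP|//]; rewrite cards_eq0 => /eqP ->.
by rewrite /subset_sum big_set0.
Qed.

Lemma e_cnt0 n : e_cnt n 0 = 1%N.
Proof. by have := eo_card n 0; rewrite o_cnt0 bin0 addn0. Qed.

Lemma eo_cnt0k k : (0 < k)%N -> e_cnt 0 k = 0%N /\ o_cnt 0 k = 0%N.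
Proof. case: k => // k _; have := eo_card 0 k.+1; rewrite bin0n; lia. Qed.

Lemma lam_m1 n k : (L n k)%:R + Lbar n k * -1 = (Nf n k)%:R :> int.
Proof.
have := L2 n k; rewrite /Lbar => /(congr1 (fun m : nat => m%:R : int)).
rewrite natrM natrD => h; rewrite mulrN1 opprB; lia.
Qed.

Theorem proposition4p3 :
  (forall n : nat, eps n 0 = 1 /\ lam n 0 = 1) /\
  (forall k : nat, (0 < k)%N -> eps 0 k = 0 /\ lam 0 k = 0) /\
  (forall n k : nat, (1 <= n)%N -> (1 <= k)%N ->
     congr_q2 (eps n k) ('X^k * (eps n.-1 k + eps n.-1 k.-1)) /\
     congr_q2 (lam n k) ('X^k * lam n.-1 k + lam n.-1 k.-1)).
Proof.
split; [move=> n | split; [move=> k hk | move=> [//|n] [//|k] _ _]].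
- rewrite /eps /lam e_cnt0 o_cnt0 /Lbar L0 bin0 subrr polyC0 !mul0r !addr0; done.
- have [h1 h2] := eo_cnt0k _ hk; rewrite /eps /lam /Lbar h1 h2 bin0n; case: k hk {h1 h2} => // k _ /=.
  by split; rewrite ?subrr ?polyC0 ?mulr0n ?mul0r ?addr0.
rewrite !succnK; split; apply: congr_eval.
- rewrite eps_eval hornerM hornerXn hornerD !eps_eval !mulr1 expr1n mul1r -!natrD !eo_card.
  by rewrite binS natrD.
- by rewrite eps_eval hornerM hornerXn hornerD !eps_eval !mulrN1 !eo_diff S_rec.
- rewrite lam_eval hornerD hornerM hornerXn !lam_eval !mulr1 expr1n mul1r /Lbar binS.
  rewrite PoszD; lia.
- by rewrite lam_eval hornerD hornerM hornerXn !lam_eval !lam_m1 NfRec.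
Qed.
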